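(* In the setting below: (1) if $b_1,b_2$ are adjacent in $G$ via the edge $e$, then $\Delta(b_1,b_2)=-\nu(e)/\nu(e^+)$; (2) if $b_1,b_2$ are adjacent in $G^+$ via the edge $e$ (an edge of $G^+$, with dual $e^+$ in $G$), then $\Delta(b_1,b_2)=-\nu(e)/\nu(e^+)$; (3) if $d_{\overline G}(b_1,b_2)>2$ then $\Delta(b_1,b_2)=0$; (4) if $d_{\overline G}(b_1,b_2)=2$, $b_1\in V$ and $b_2\in V^+$, then $\Delta(b_1,b_2)=0$; (5) for every $b\in V$, $\Delta(b,b)=\sum_{e\in E:\,e\ni b}\nu(e)/\nu(e^+)$; (6) for every $b\in V^+$, $\Delta(b,b)=\sum_{e\in E^+:\,e\ni b}\nu(e)/\nu(e^+)$.
   Context: $G=(V,E)$ is an infinite connected graph properly embedded in the unit disk with every face bounded and finite, with weights $\nu>0$; $G^+=(V^+,E^+)$ is the dual with weights $\nu>0$; $e^+$ is the dual of $e$; each dual vertex lies inside its face, edges are Euclidean segments and each pair $e,e^+$ is perpendicular. $\overline G$: black vertices $V\cup V^+$, white vertices the crossing points $e\cap e^+$, adjacent to the endpoints of $e$ and $e^+$; $d_{\overline G}$ is graph distance in $\overline G$. $\overline\partial(u,v)=0$ unless adjacent; for adjacent white $w$ and black $b$, with $f$ the edge of $G$ or $G^+$ having endpoint $b$ and containing $w$, $\overline\partial(w,b)=\overline\partial(b,w)=\nu(f)\frac{b-w}{|b-w|}$. $\overline D=S\overline\partial S^*$ where $S$ is diagonal with $S(b,b)=1$ for black $b$ and $S(w,w)=(\nu(e)\nu(e^+))^{-1/2}$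 for $w=e\cap e^+$; $\Delta=\overline D^*\overline D$, considered on pairs of black vertices $b_1,b_2$. *)

(* Defs.v *)
From HB Require Import structures.
From mathcomp Require Import all_boot all_order all_algebra.
From mathcomp Require Import boolp classical_sets cardinality fsbigop.
From mathcomp.real_closed Require Import complex.
Set Implicit Arguments. Unset Strict Implicit. Unset Printing Implicit Defensive.
Import Order.TTheory GRing.Theory Num.Theory.
Local Open Scope ring_scope.
Local Open Scope classical_set_scope.
Local Open Scope complex_scope.

Fixpoint walk (T : Type) (adj : T -> T -> Prop) (n : nat) (x y : T) : Prop :=
  match n with
  | 0 => x = y
  | n'.+1 => exists z, adj x z /\ walk adj n' z y
  end.

Definition gdist_is (T : Type) (adj : T -> T -> Prop) (x y : T) (n : nat) : Prop :=
  walk adj n x y /\ forall m, (m < n)%N -> ~ walk adj m x y.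

(* The setting.  G = (V,E) with dual G^+ = (F,E^+); the dual edges are  *)
(* indexed by the same type E (e^+ is the dual of e).  Edge e of G goes *)
(* from [src e] to [tgt e]; the faces of G on its left/right (as seen   *)
(* along src -> tgt) are [lf e], [rf e]; e^+ joins [lf e] and [rf e].   *)
(* The embedding is recorded by the positions of V, F (= V^+) and the   *)
(* crossing points w(e) = e \cap e^+, together with the rotation system *)
(* (counterclockwise successor [rot] of darts around each vertex) that  *)
(* the embedding induces.  A dart is (e, true) = src->tgt or            *)
(* (e, false) = tgt->src.                                               *)

Record dual_setting (R : rcfType) := DualSetting {
  V : choiceType;
  F : choiceType;
  E : choiceType;
  src : E -> V; tgt : E -> V;
  lf : E -> F; rf : E -> F;
  nu : E -> R;
  nud : E -> R;            (* nu(e^+) *)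
  pV : V -> R[i]; pF : F -> R[i]; pW : E -> R[i];
  rot : E * bool -> E * bool;

  nu_gt0 : forall e, 0 < nu e;
  nud_gt0 : forall e, 0 < nud e;
  V_infinite : ~ finite_set [set: V];
  G_connected : forall u v : V, exists n,
      walk (fun a b => exists e, (src e = a /\ tgt e = b) \/ (src e = b /\ tgt e = a)) n u v;
  pV_disk : forall v, `|pV v| < 1;
  pF_disk : forall f, `|pF f| < 1;
  pV_inj : injective pV;
  pF_inj : injective pF;
  (* straight-line embeddings: no loops, no multiple edges in G and G^+ *)
  src_neq_tgt : forall e, src e <> tgt e;
  lf_neq_rf : forall e, lf e <> rf e;
  E_simple : forall e e', ((src e = src e' /\ tgt e = tgt e') \/
                           (src e = tgt e' /\ tgt e = src e')) -> e = e';
  Ed_simple : forall e e', ((lf e = lf e' /\ rf e = rf e') \/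
                            (lf e = rf e' /\ rf e = lf e')) -> e = e';
  deg_finite : forall v, finite_set [set e | src e = v \/ tgt e = v];
  face_finite : forall f, finite_set [set e | lf e = f \/ rf e = f];
  pW_on_e : forall e, exists t : R, 0 < t < 1 /\
      pW e = pV (src e) + t%:C * (pV (tgt e) - pV (src e));
  pW_on_ed : forall e, exists t : R, 0 < t < 1 /\
      pW e = pF (lf e) + t%:C * (pF (rf e) - pF (lf e));
  perp : forall e,
      Re ((pV (tgt e) - pV (src e)) * conjc (pF (rf e) - pF (lf e))) = 0;
  lf_left : forall e,
      0 < Im (conjc (pV (tgt e) - pV (src e)) * (pF (lf e) - pW e));
  (* rotation system: rot permutes the darts around each vertex, in a single
     (finite) cycle, and the face between a dart and its ccw successor is the
     face on the left of the former and on the right of the latter *)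
  rot_bij : bijective rot;
  rot_tail : forall d, (if d.2 then src d.1 else tgt d.1) =
                       (if (rot d).2 then src (rot d).1 else tgt (rot d).1);
  rot_cycle : forall d d', (if d.2 then src d.1 else tgt d.1) =
                           (if d'.2 then src d'.1 else tgt d'.1) ->
                           exists n, iter n rot d = d';
  rot_face : forall d, (if d.2 then lf d.1 else rf d.1) =
                       (if (rot d).2 then rf (rot d).1 else lf (rot d).1)
}.

Section Operators.
Variables (R : rcfType) (G : dual_setting R).

(* vertices of \overline G: black = inl (V + F), white = inr e (the point e \cap e^+) *)
Definition GbarV : choiceType := ((V G + F G) + E G)%type.

Definition wb_adj (e : E G) (b : V G + F G) : Prop :=
  match b with
  | inl v => v = src e \/ v = tgt e
  | inr f => f = lf e \/ f = rf e
  end.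

Definition Gbar_adj (x y : GbarV) : Prop :=
  match x, y with
  | inl b, inr e => wb_adj e b
  | inr e, inl b => wb_adj e b
  | _, _ => False
  end.

Definition posB (b : V G + F G) : R[i] :=
  match b with inl v => pV v | inr f => pF f end.

(* weight of the edge f of G or G^+ having endpoint b and containing w(e) *)
Definition wt (e : E G) (b : V G + F G) : R :=
  match b with inl _ => nu e | inr _ => nud e end.

Definition dbar_wb (e : E G) (b : V G + F G) : R[i] :=
  if `[< wb_adj e b >] then
    (wt e b)%:C * ((posB b - pW e) / `|posB b - pW e|)
  else 0.

Definition dbar (x y : GbarV) : R[i] :=
  match x, y with
  | inr e, inl b => dbar_wb e b
  | inl b, inr e => dbar_wb e b
  | _, _ => 0
  end.

Definition Sdiag (x : GbarV) : R[i] :=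
  match x with
  | inl _ => 1
  | inr e => ((Num.sqrt (nu e * nud e))^-1)%:C
  end.

Definition Dbar (x y : GbarV) : R[i] := Sdiag x * dbar x y * conjc (Sdiag y).

(* Delta = \overline D^* \overline D; the sum over all vertices of \overline G
   has finite support (fsbig) for black arguments *)
Definition Delta (x y : GbarV) : R[i] :=
  \sum_(u \in [set: GbarV]) (conjc (Dbar u x) * Dbar u y).

End Operators.

(* Main.v *)
Require Import Defs.
From HB Require Import structures.
From mathcomp Require Import all_boot all_order all_algebra.
From mathcomp Require Import boolp classical_sets cardinality fsbigop.
From mathcomp.real_closed Require Import complex.
From mathcomp Require Import functions ring lra.
Set Implicit Arguments. Unset Strict Implicit. Unset Printing Implicit Defensive.
Import Order.TTheory GRing.Theory Num.Theory.
Local Open Scope ring_scope.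
Local Open Scope classical_set_scope.
Local Open Scope complex_scope.

Lemma normC_real (R : rcfType) (x : R) : `|x%:C| = `|x|%:C.
Proof. by rewrite normc_def /= expr0n addr0 sqrtr_sqr. Qed.

Lemma conj_norm (R : rcfType) (z : R[i]) : conjc `|z| = `|z|.
Proof. by rewrite normc_def conjc_real. Qed.

Lemma ReJ (R : rcfType) (z : R[i]) : complex.Re (conjc z) = complex.Re z.
Proof. by case: z => a b. Qed.

Lemma ImJ (R : rcfType) (z : R[i]) : complex.Im (conjc z) = - complex.Im z.
Proof. by case: z => a b. Qed.

Lemma ImrM (R : rcfType) (r : R) (z : R[i]) : complex.Im (r%:C * z) = r * complex.Im z.
Proof. by case: z => a b /=; rewrite mul0r addr0. Qed.

Lemma ReM_self (R : rcfType) (a : R[i]) : a != 0 ->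
  conjc a * a / (`|a| * `|a|) = 1.
Proof.
move=> a0; rewrite -expr2 sqr_normc [conjc a * a]mulrC divff //.
by rewrite mulf_neq0 // conjc_eq0.
Qed.

Lemma conjcM (R: rcfType) (x y : R[i]) : conjc (x * y) = conjc x * conjc y.
Proof. exact: rmorphM. Qed.

Lemma unit_prod (R : rcfType) (al be : R) (a b : R[i]) : al != 0 -> be != 0 ->
  conjc (al%:C * a) * (be%:C * b) / (`|al%:C * a| * `|be%:C * b|) =
  (Num.sg (al * be))%:C * (conjc a * b / (`|a| * `|b|)).
Proof.
move=> a0 b0; have hc : forall x : R, conjc (x%:C) = x%:C by move=> x; rewrite /= oppr0.
rewrite conjcM hc !normrM !normC_real.
have -> : Num.sg (al * be) = al * be / (`|al| * `|be|).
  by rewrite -normrM -{2}(mulr_sg_norm (al * be)) mulfK // normr_eq0 mulf_neq0.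
rewrite !rmorphM rmorphV ?unitfE ?mulf_neq0 ?normr_eq0 //= rmorphM /=.
have ha : (`|al|%:C : R[i]) != 0 by rewrite (inj_eq (@complexI _)) normr_eq0.
have hb : (`|be|%:C : R[i]) != 0 by rewrite (inj_eq (@complexI _)) normr_eq0.
rewrite !invfM; ring.
Qed.

Lemma imag_unit (R : rcfType) (w : R[i]) : complex.Re w = 0 -> complex.Im w < 0 -> w / `|w| = - 'i.
Proof.
case: w => x y /= -> yn.
rewrite normc_def /= expr0n add0r sqrtr_sqr ltr0_norm //.
have -> : (0 +i* y) = - 'i * (- y)%:C.
  by apply/eqP; rewrite eq_complex /= !(oppr0, mul0r, mulr0, subr0, addr0, add0r, mulN1r, opprK) !eqxx.
rewrite mulfK // (inj_eq (@complexI _)) oppr_eq0; exact: ltr0_neq0.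
Qed.

Lemma imag_unit' (R : rcfType) (w : R[i]) : complex.Re w = 0 -> 0 < complex.Im w -> w / `|w| = 'i.
Proof.
case: w => x y /= -> yn.
rewrite normc_def /= expr0n add0r sqrtr_sqr gtr0_norm //.
have -> : (0 +i* y) = 'i * y%:C.
  by apply/eqP; rewrite eq_complex /= !(oppr0, mul0r, mulr0, subr0, addr0, add0r, mul1r) !eqxx.
rewrite mulfK // (inj_eq (@complexI _)); exact: lt0r_neq0.
Qed.

Definition avec (R : rcfType) (G : dual_setting R) (e : E G) := pV (tgt e) - pV (src e).
Definition bvec (R : rcfType) (G : dual_setting R) (e : E G) := pF (rf e) - pF (lf e).

Lemma geoV (R : rcfType) (G : dual_setting R) (e : E G) : exists t : R, 0 < t < 1 /\
  pV (src e) - pW e = (-t)%:C * avec e /\ pV (tgt e) - pW e = (1-t)%:C * avec e.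
Proof.
have [t [t01 ->]] := pW_on_e e; exists t; split => //; rewrite /avec.
by rewrite rmorphN rmorphB rmorph1; split; ring.
Qed.

Lemma geoF (R : rcfType) (G : dual_setting R) (e : E G) : exists t : R, 0 < t < 1 /\
  pF (lf e) - pW e = (-t)%:C * bvec e /\ pF (rf e) - pW e = (1-t)%:C * bvec e.
Proof.
have [t [t01 ->]] := pW_on_ed e; exists t; split => //; rewrite /bvec.
by rewrite rmorphN rmorphB rmorph1; split; ring.
Qed.

Lemma avec_neq0 (R : rcfType) (G : dual_setting R) (e : E G) : avec e != 0.
Proof.
rewrite /avec subr_eq0; apply/eqP => /pV_inj h; exact: (src_neq_tgt (esym h)).
Qed.

Lemma bvec_neq0 (R : rcfType) (G : dual_setting R) (e : E G) : bvec e != 0.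
Proof.
rewrite /bvec subr_eq0; apply/eqP => /pF_inj h; exact: (lf_neq_rf (esym h)).
Qed.

Lemma ab_Re (R : rcfType) (G : dual_setting R) (e : E G) : complex.Re (conjc (avec e) * bvec e) = 0.
Proof.
have := perp e; rewrite -complexRe => /complexI.
by rewrite -ReJ conjcM conjcK.
Qed.

Lemma ab_Im (R : rcfType) (G : dual_setting R) (e : E G) : complex.Im (conjc (avec e) * bvec e) < 0.
Proof.
have := lf_left e; have [t [/andP[t0 t1] [-> _]]] := geoF e.
rewrite -complexIm ltcR mulrCA ImrM -/(avec e).
rewrite mulNr oppr_gt0 => h; rewrite -(pmulr_rlt0 _ t0) //.
Qed.

Definition trm (R : rcfType) (G : dual_setting R) (e : E G) (b1 b2 : V G + F G) : R[i] :=
  conjc (Dbar (inr e : GbarV G) (inl b1)) * Dbar (inr e : GbarV G) (inl b2).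

Lemma trm_out (R : rcfType) (G : dual_setting R) (e : E G) (b1 b2 : V G + F G) :
  ~ (wb_adj e b1 /\ wb_adj e b2) -> trm e b1 b2 = 0.
Proof.
move=> h; rewrite /trm /Dbar /= /dbar_wb.
case: (pselect (wb_adj e b1)) => h1; last by rewrite asboolF // !(mulr0, mul0r, conjc0).
case: (pselect (wb_adj e b2)) => h2; last by rewrite (asboolF h2) !(mulr0, mul0r).
by case: h.
Qed.

Lemma trm_val (R : rcfType) (G : dual_setting R) (e : E G) (b1 b2 : V G + F G) :
  wb_adj e b1 -> wb_adj e b2 -> trm e b1 b2 =
  ((wt e b1 * wt e b2) / (nu e * nud e))%:C *
  (conjc (posB b1 - pW e) * (posB b2 - pW e) / (`|posB b1 - pW e| * `|posB b2 - pW e|)).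
Proof.
move=> h1 h2; rewrite /trm /Dbar /= /dbar_wb !asboolT //.
have hc : forall x : R, conjc (x%:C) = x%:C by move=> x; rewrite /= oppr0.
have e1 : (1 -i* 0 : R[i]) = 1 by rewrite oppr0.
have e2 : conjc (1 -i* 0 : R[i]) = 1 by rewrite /= !oppr0.
rewrite !conjcM !hc e2 e1 conjc_inv conj_norm.
have pos : 0 <= nu e * nud e by rewrite mulr_ge0 // ltW // ?nu_gt0 ?nud_gt0.
have -> : (wt e b1 * wt e b2 / (nu e * nud e)) =
   wt e b1 * wt e b2 * ((Num.sqrt (nu e * nud e))^-1 * (Num.sqrt (nu e * nud e))^-1).
  by rewrite -invfM -expr2 sqr_sqrtr.
rewrite !rmorphM /= invfM; ring.
Qed.

Lemma Delta_sum (R : rcfType) (G : dual_setting R) (b1 b2 : V G + F G) (S : set (E G)) :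
  (forall e, ~ S e -> trm e b1 b2 = 0) ->
  Delta (inl b1 : GbarV G) (inl b2) = \sum_(e \in S) trm e b1 b2.
Proof.
move=> hS; rewrite /Delta -(fsbig_widen (inr @` S)) //.
  rewrite fsbig_image //; by move=> x y _ _ [].
move=> [b|e] [_ hn] /=.
  by rewrite /Dbar /= !(mulr0, mul0r).
apply: hS => Se; apply: hn; by exists e.
Qed.

Lemma part1 (R : rcfType) (G : dual_setting R) (e : E G) (v1 v2 : V G) :
  (v1 = src e /\ v2 = tgt e) \/ (v1 = tgt e /\ v2 = src e) ->
  Delta (inl (inl v1) : GbarV G) (inl (inl v2)) = - (nu e / nud e)%:C.
Proof.
move=> H.
have st := @src_neq_tgt _ G.
rewrite (@Delta_sum _ _ _ _ [set e]); last first.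
  move=> e' ne; apply: trm_out => /= -[a1 a2]; apply: ne.
  case: H a1 a2 => -[-> ->] [h1|h1] [h2|h2];
   first [ by apply: E_simple; left; split
         | by apply: E_simple; right; split
         | by exfalso; apply: (st e); congruence
         | by exfalso; apply: (st e'); congruence ].
have adj1 : wb_adj e (inl v1) by case: H => [[-> _]|[-> _]]; [left|right].
have adj2 : wb_adj e (inl v2) by case: H => [[_ ->]|[_ ->]]; [right|left].
rewrite fsbig_set1 trm_val //=.
have [t [/andP[t0 t1] [hs ht]]] := geoV e.
have n0 : - t != 0 by rewrite oppr_eq0 gt_eqF.
have n1 : 1 - t != 0 by rewrite subr_eq0 gt_eqF.
have sg1 : Num.sg (- t * (1 - t)) = -1 by apply: ltr0_sg; rewrite mulNr oppr_lt0 mulr_gt0 // subr_gt0.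
have sg2 : Num.sg ((1 - t) * - t) = -1 by rewrite mulrC.
have hnu : nu e != 0 by rewrite gt_eqF ?nu_gt0.
have hnud : nud e != 0 by rewrite gt_eqF ?nud_gt0.
case: H => -[-> ->]; rewrite ?hs ?ht unit_prod // ?sg1 ?sg2 ReM_self ?avec_neq0 // mulr1 rmorphN1 mulrN1;
  congr (- _%:C); field; by rewrite hnu hnud.
Qed.

Lemma part2 (R : rcfType) (G : dual_setting R) (e : E G) (f1 f2 : F G) :
  (f1 = lf e /\ f2 = rf e) \/ (f1 = rf e /\ f2 = lf e) ->
  Delta (inl (inr f1) : GbarV G) (inl (inr f2)) = - (nud e / nu e)%:C.
Proof.
move=> H.
have st := @lf_neq_rf _ G.
rewrite (@Delta_sum _ _ _ _ [set e]); last first.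
  move=> e' ne; apply: trm_out => /= -[a1 a2]; apply: ne.
  case: H a1 a2 => -[-> ->] [h1|h1] [h2|h2];
   first [ by apply: Ed_simple; left; split
         | by apply: Ed_simple; right; split
         | by exfalso; apply: (st e); congruence
         | by exfalso; apply: (st e'); congruence ].
have adj1 : wb_adj e (inr f1) by case: H => [[-> _]|[-> _]]; [left|right].
have adj2 : wb_adj e (inr f2) by case: H => [[_ ->]|[_ ->]]; [right|left].
rewrite fsbig_set1 trm_val //=.
have [t [/andP[t0 t1] [hs ht]]] := geoF e.
have n0 : - t != 0 by rewrite oppr_eq0 gt_eqF.
have n1 : 1 - t != 0 by rewrite subr_eq0 gt_eqF.
have sg1 : Num.sg (- t * (1 - t)) = -1 by apply: ltr0_sg; rewrite mulNr oppr_lt0 mulr_gt0 // subr_gt0.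
have sg2 : Num.sg ((1 - t) * - t) = -1 by rewrite mulrC.
have hnu : nu e != 0 by rewrite gt_eqF ?nu_gt0.
have hnud : nud e != 0 by rewrite gt_eqF ?nud_gt0.
case: H => -[-> ->]; rewrite ?hs ?ht unit_prod // ?sg1 ?sg2 ReM_self ?bvec_neq0 // mulr1 rmorphN1 mulrN1;
  congr (- _%:C); field; by rewrite hnu hnud.
Qed.

Lemma part5 (R : rcfType) (G : dual_setting R) (v : V G) :
  Delta (inl (inl v) : GbarV G) (inl (inl v)) =
  \sum_(e \in [set e : E G | src e = v \/ tgt e = v]) (nu e / nud e)%:C.
Proof.
rewrite (@Delta_sum _ _ _ _ [set e : E G | src e = v \/ tgt e = v]); last first.
  move=> e' ne; apply: trm_out => /= -[a1 _]; apply: ne => /=.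
  by case: a1 => ->; [left|right].
apply: eq_fsbigr => e; rewrite inE /= => a.
have adj : wb_adj e (inl v) by case: a => <-; [left|right].
rewrite trm_val //=.
have [t [/andP[t0 t1] [hs ht]]] := geoV e.
have n0 : - t != 0 by rewrite oppr_eq0 gt_eqF.
have n1 : 1 - t != 0 by rewrite subr_eq0 gt_eqF.
have hnu : nu e != 0 by rewrite gt_eqF ?nu_gt0.
have hnud : nud e != 0 by rewrite gt_eqF ?nud_gt0.
rewrite ReM_self ?mulr1; last first.
  by case: a => <-; rewrite ?hs ?ht mulf_neq0 ?avec_neq0 // (inj_eq (@complexI _)).
congr (_%:C); field; by rewrite hnu hnud.
Qed.

Lemma part6 (R : rcfType) (G : dual_setting R) (f : F G) :
  Delta (inl (inr f) : GbarV G) (inl (inr f)) =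
  \sum_(e \in [set e : E G | lf e = f \/ rf e = f]) (nud e / nu e)%:C.
Proof.
rewrite (@Delta_sum _ _ _ _ [set e : E G | lf e = f \/ rf e = f]); last first.
  move=> e' ne; apply: trm_out => /= -[a1 _]; apply: ne => /=.
  by case: a1 => ->; [left|right].
apply: eq_fsbigr => e; rewrite inE /= => a.
have adj : wb_adj e (inr f) by case: a => <-; [left|right].
rewrite trm_val //=.
have [t [/andP[t0 t1] [hs ht]]] := geoF e.
have n0 : - t != 0 by rewrite oppr_eq0 gt_eqF.
have n1 : 1 - t != 0 by rewrite subr_eq0 gt_eqF.
have hnu : nu e != 0 by rewrite gt_eqF ?nu_gt0.
have hnud : nud e != 0 by rewrite gt_eqF ?nud_gt0.
rewrite ReM_self ?mulr1; last first.
  by case: a => <-; rewrite ?hs ?ht mulf_neq0 ?bvec_neq0 // (inj_eq (@complexI _)).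
congr (_%:C); field; by rewrite hnu hnud.
Qed.

Lemma part3 (R : rcfType) (G : dual_setting R) (b1 b2 : V G + F G) :
  (forall n, gdist_is (@Gbar_adj R G) (inl b1) (inl b2) n -> (2 < n)%N) ->
  Delta (inl b1 : GbarV G) (inl b2) = 0.
Proof.
move=> H; rewrite (@Delta_sum _ _ _ _ set0) ?fsbig_set0 //.
move=> e _; apply: trm_out => -[a1 a2].
have w2 : walk (@Gbar_adj R G) 2 (inl b1) (inl b2).
  by exists (inr e); split => //; exists (inl b2).
case: (pselect (b1 = b2)) => [eq|ne].
  subst b2; suff : (2 < 0)%N by []. by apply: H; split.
suff : (2 < 2)%N by rewrite ltnn. apply: H; split => //.
case => [|[|m]] // _ /=.
  by move=> h; apply: ne; congruence.
by case=> z [h ez]; subst z.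
Qed.

Lemma ab_unit (R : rcfType) (G : dual_setting R) (e : E G) :
  conjc (avec e) * bvec e / (`|avec e| * `|bvec e|) = - 'i.
Proof. by rewrite -(normcJ (avec e)) -normrM; apply: imag_unit; [apply: ab_Re | apply: ab_Im]. Qed.

Definition tl (R : rcfType) (G : dual_setting R) (d : E G * bool) := if d.2 then src d.1 else tgt d.1.
Definition lfc (R : rcfType) (G : dual_setting R) (d : E G * bool) := if d.2 then lf d.1 else rf d.1.
Definition rfc (R : rcfType) (G : dual_setting R) (d : E G * bool) := if d.2 then rf d.1 else lf d.1.
Definition dv (R : rcfType) (G : dual_setting R) (v : V G) (e : E G) := (e, src e == v).

Lemma trm_vf (R : rcfType) (G : dual_setting R) (e : E G) (v : V G) (f : F G) :
  (src e = v \/ tgt e = v) -> (lf e = f \/ rf e = f) ->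
  trm e (inl v) (inr f) = if lfc (dv v e) == f then - 'i else 'i.
Proof.
move=> av af.
rewrite trm_val /=; last 2 first.
- by case: av => <-; [left|right].
- by case: af => <-; [left|right].
have hnu : nu e != 0 by rewrite gt_eqF ?nu_gt0.
have hnud : nud e != 0 by rewrite gt_eqF ?nud_gt0.
rewrite divff ?mulf_neq0 // mul1r.
have [t [/andP[t0 t1] [hs ht]]] := geoV e.
have [s [/andP[s0 s1] [hl hr]]] := geoF e.
have n0 : - t != 0 by rewrite oppr_eq0 gt_eqF.
have n1 : 1 - t != 0 by rewrite subr_eq0 gt_eqF.
have m0 : - s != 0 by rewrite oppr_eq0 gt_eqF.
have m1 : 1 - s != 0 by rewrite subr_eq0 gt_eqF.
have lr := @lf_neq_rf _ G e.
rewrite /lfc /dv /=.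
case: (eqVneq (src e) v) => [<-|hsv] /=.
  case: af => <-; rewrite ?eqxx; last rewrite (introF eqP lr).
  - rewrite hs hl unit_prod // ab_unit gtr0_sg; last by rewrite mulrNN mulr_gt0.
    by rewrite mul1r.
  - rewrite hs hr unit_prod // ab_unit ltr0_sg; last by rewrite mulNr oppr_lt0 mulr_gt0 // subr_gt0.
    by rewrite rmorphN1 mulN1r opprK.
have htv : tgt e = v by case: av => // h; rewrite h eqxx in hsv.
rewrite -htv.
case: af => <-; rewrite ?eqxx; first rewrite (introF eqP (nesym lr)).
- rewrite ht hl unit_prod // ab_unit ltr0_sg; last by rewrite mulrN oppr_lt0 mulr_gt0 // subr_gt0.
  by rewrite rmorphN1 mulN1r opprK.
- rewrite ht hr unit_prod // ab_unit gtr0_sg; last by rewrite mulr_gt0 // subr_gt0.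
  by rewrite mul1r.
Qed.

Lemma dv_tl (R : rcfType) (G : dual_setting R) (v : V G) (d : E G * bool) :
  tl d = v -> dv v d.1 = d.
Proof.
case: d => e [] h; rewrite /tl /= in h; rewrite /dv /=; first by rewrite h eqxx.
case: eqP => // hs; exfalso; apply: (@src_neq_tgt _ G e); by rewrite hs h.
Qed.

Lemma tl_dv (R : rcfType) (G : dual_setting R) (v : V G) (e : E G) :
  (src e = v \/ tgt e = v) -> tl (dv v e) = v.
Proof.
rewrite /tl /dv /=; case: eqP => // hs; by case.
Qed.

Lemma lr_dart (R : rcfType) (G : dual_setting R) (d : E G * bool) : lfc d <> rfc d.
Proof. by case: d => e [] /=; rewrite /lfc /rfc /= => h; apply: (@lf_neq_rf _ G e). Qed.

Lemma tl_adj (R : rcfType) (G : dual_setting R) (v : V G) (d : E G * bool) :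
  tl d = v -> src d.1 = v \/ tgt d.1 = v.
Proof. by case: d => e [] /=; rewrite /tl /=; [left|right]. Qed.

Lemma fc_adj (R : rcfType) (G : dual_setting R) (f : F G) (d : E G * bool) :
  lfc d = f \/ rfc d = f -> lf d.1 = f \/ rf d.1 = f.
Proof. by case: d => e [] /=; rewrite /lfc /rfc /= => -[]; tauto. Qed.

Lemma adj_fc (R : rcfType) (G : dual_setting R) (f : F G) (d : E G * bool) :
  lf d.1 = f \/ rf d.1 = f -> lfc d = f \/ rfc d = f.
Proof. by case: d => e [] /=; rewrite /lfc /rfc /= => -[]; tauto. Qed.

Lemma part4 (R : rcfType) (G : dual_setting R) (v : V G) (f : F G) :
  Delta (inl (inl v) : GbarV G) (inl (inr f)) = 0.
Proof.
pose A := [set e : E G | (src e = v \/ tgt e = v) /\ (lf e = f \/ rf e = f)].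
pose B := [set e : E G | lfc (dv v e) = f].
rewrite (@Delta_sum _ _ _ _ A); last first.
  move=> e ne; apply: trm_out => /= -[a1 a2]; apply: ne; split.
    by case: a1 => ->; [left|right].
  by case: a2 => ->; [left|right].
have finA : finite_set A.
  apply: sub_finite_set (@deg_finite _ G v); by move=> e [[]] h _; [left|right].
rewrite (fsbigID B) //.
rewrite (eq_fsbigr (fun _ => - 'i)); last first.
  move=> e; rewrite inE => -[[a1 a2] hB] /=. have -> := trm_vf a1 a2. by rewrite hB eqxx.
rewrite (@eq_fsbigr _ _ _ _ _ (fun _ => 'i) (A `&` ~` B)); last first.
  move=> e; rewrite inE => -[[a1 a2] hB] /=. have -> := trm_vf a1 a2. by rewrite (introF eqP hB).
pose g := fun e : E G => (Defs.rot (dv v e)).1.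
have [rinv hK hK'] := @rot_bij _ G.
have rt : forall d, tl (Defs.rot d) = tl d by move=> d; rewrite /tl; symmetry; apply: rot_tail.
have rf_ : forall d, rfc (Defs.rot d) = lfc d by move=> d; rewrite /rfc /lfc; symmetry; apply: rot_face.
have bij : set_bij (A `&` B) (A `&` ~` B) g.
  split.
  - move=> e [[a1 a2] hB]; rewrite /g.
    have tv : tl (Defs.rot (dv v e)) = v by rewrite rt tl_dv.
    have hr : rfc (Defs.rot (dv v e)) = f by rewrite rf_.
    split; [split|].
    + exact: tl_adj tv.
    + by apply: fc_adj; right.
    + rewrite /B /= dv_tl // => hl; apply: (@lr_dart _ G (Defs.rot (dv v e))); by rewrite hl hr.
  - move=> e1 e2; rewrite !inE => -[[a1 _] _] -[[a2 _] _]; rewrite /g => h.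
    have t1 : tl (Defs.rot (dv v e1)) = v by rewrite rt tl_dv.
    have t2 : tl (Defs.rot (dv v e2)) = v by rewrite rt tl_dv.
    have : Defs.rot (dv v e1) = Defs.rot (dv v e2) by rewrite -(dv_tl t1) -(dv_tl t2) h.
    by move/(can_inj hK) => [].
  - move=> e' [[a1 a2] hB].
    have t' : tl (dv v e') = v by rewrite tl_dv.
    have r' : rfc (dv v e') = f by case: (adj_fc (d := dv v e') a2).
    pose d := rinv (dv v e').
    have td : tl d = v by rewrite -rt /d hK'.
    have ld : lfc d = f by rewrite -rf_ /d hK'.
    exists d.1.
      split; [split|].
      + exact: tl_adj td.
      + by apply: fc_adj; left.
      + by rewrite /B /= dv_tl.
    by rewrite /g dv_tl // /d hK'.
rewrite (reindex_fsbig g (A `&` B) (A `&` ~` B)) //.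
rewrite -fsbig_split; last by apply: sub_finite_set finA => e [].
by apply: fsbig1 => e _ /=; rewrite addNr.
Qed.

Theorem lemma4p7 (R : rcfType) (G : dual_setting R) :
  (* (1) b1, b2 adjacent in G via e *)
  (forall (e : E G) (v1 v2 : V G),
      (v1 = src e /\ v2 = tgt e) \/ (v1 = tgt e /\ v2 = src e) ->
      Delta (inl (inl v1)) (inl (inl v2)) = - (nu e / nud e)%:C) /\
  (* (2) b1, b2 adjacent in G^+ via the dual edge e^+ (ratio nu(e^+)/nu(e)) *)
  (forall (e : E G) (f1 f2 : F G),
      (f1 = lf e /\ f2 = rf e) \/ (f1 = rf e /\ f2 = lf e) ->
      Delta (inl (inr f1)) (inl (inr f2)) = - (nud e / nu e)%:C) /\
  (* (3) d(b1,b2) > 2 *)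
  (forall b1 b2 : V G + F G,
      (forall n, gdist_is (@Gbar_adj R G) (inl b1) (inl b2) n -> (2 < n)%N) ->
      Delta (inl b1) (inl b2) = 0) /\
  (* (4) d(b1,b2) = 2, b1 in V, b2 in V^+ *)
  (forall (v : V G) (f : F G),
      gdist_is (@Gbar_adj R G) (inl (inl v)) (inl (inr f)) 2 ->
      Delta (inl (inl v)) (inl (inr f)) = 0) /\
  (* (5) diagonal, b in V *)
  (forall v : V G,
      Delta (inl (inl v)) (inl (inl v)) =
      \sum_(e \in [set e : E G | src e = v \/ tgt e = v]) (nu e / nud e)%:C) /\
  (* (6) diagonal, b in V^+ *)
  (forall f : F G,
      Delta (inl (inr f)) (inl (inr f)) =
      \sum_(e \in [set e : E G | lf e = f \/ rf e = f]) (nud e / nu e)%:C).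
Proof.
split; first exact: part1.
split; first exact: part2.
split; first exact: part3.
split; first by move=> v f _; exact: part4.
split; first exact: part5.
exact: part6.
Qed.
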